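(* Let $\mathbf{A}=\langle A,\wedge,\vee,\cdot,1,0,{\sim},-,'\rangle$ be a quasi relation algebra. The set $C=\{a\in A\mid {\sim}a=-a\}$ is a subuniverse of $\mathbf{A}$ (closed under $\wedge,\vee,\cdot,{\sim},-,'$ and containing $0,1$), and the resulting subalgebra is a cyclic quasi relation algebra.
   Context: An FL-algebra $\langle A,\wedge,\vee,\cdot,1,\backslash,/,0\rangle$ is a residuated lattice (a lattice $\langle A,\wedge,\vee\rangle$, a monoid $\langle A,\cdot,1\rangle$, with $a\cdot b\le c \iff a\le c/b\iff b\le a\backslash c$) together with an arbitrary constant $0$. Define ${\sim}a=a\backslash 0$, $-a=0/a$ and $a+b={\sim}(-b\cdot -a)$. It is an InFL-algebra if ${\sim}{-}a={-}{\sim}a=a$ for all $a$. A quasi relation algebra (qRA) is an InFL-algebra with a unary operation $'$ such that for all $a,b$: $a''=a$, $(a\vee b)'=a'\wedge b'$, $({\sim}a)'=-(a')$, and $(a\cdot b)'=a'+b'$; it is written in the signature $\langle A,\wedge,\vee,\cdot,1,0,{\sim},-,'\rangle$. A qRA is cyclic if ${\sim}a=-a$ for all $a$. *)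

(* Defs.v *)
(* Operations of an FL-algebra with an extra unary operation ' (prime).
   ~ and - are the derived operations a\0 and 0/a. *)
Record qra_ops (A : Type) := QraOps {
  meet : A -> A -> A;
  join : A -> A -> A;
  mul  : A -> A -> A;
  one  : A;
  ldiv : A -> A -> A;
  rdiv : A -> A -> A;
  zero : A;
  prim : A -> A
}.
Arguments meet {A} _ _ _.
Arguments join {A} _ _ _.
Arguments mul {A} _ _ _.
Arguments one {A} _.
Arguments ldiv {A} _ _ _.
Arguments rdiv {A} _ _ _.
Arguments zero {A} _.
Arguments prim {A} _ _.

Section Q.
Context {A : Type} (o : qra_ops A).

Definition le (a b : A) : Prop := meet o a b = a.
Definition tneg (a : A) : A := ldiv o a (zero o).
Definition mneg (a : A) : A := rdiv o (zero o) a.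
Definition plus (a b : A) : A := tneg (mul o (mneg b) (mneg a)).

(* All FL/InFL/qRA axioms, with every universally quantified variable
   relativized to the predicate P.  With P := (fun _ => True) this is exactly
   the definition of a quasi relation algebra; for a subuniverse P it says
   that the subalgebra on P (with the restricted operations) is a qRA. *)
Definition is_qRA_on (P : A -> Prop) : Prop :=
  (forall a b c, P a -> P b -> P c -> meet o a (meet o b c) = meet o (meet o a b) c) /\
  (forall a b c, P a -> P b -> P c -> join o a (join o b c) = join o (join o a b) c) /\
  (forall a b, P a -> P b -> meet o a b = meet o b a) /\
  (forall a b, P a -> P b -> join o a b = join o b a) /\
  (forall a b, P a -> P b -> meet o a (join o a b) = a) /\
  (forall a b, P a -> P b -> join o a (meet o a b) = a) /\
  (forall a b c, P a -> P b -> P c -> mul o a (mul o b c) = mul o (mul o a b) c) /\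
  (forall a, P a -> mul o (one o) a = a) /\
  (forall a, P a -> mul o a (one o) = a) /\
  (forall a b c, P a -> P b -> P c ->
     (le (mul o a b) c <-> le a (rdiv o c b)) /\
     (le (mul o a b) c <-> le b (ldiv o a c))) /\
  (forall a, P a -> tneg (mneg a) = a /\ mneg (tneg a) = a) /\
  (forall a, P a -> prim o (prim o a) = a) /\
  (forall a b, P a -> P b -> prim o (join o a b) = meet o (prim o a) (prim o b)) /\
  (forall a, P a -> prim o (tneg a) = mneg (prim o a)) /\
  (forall a b, P a -> P b -> prim o (mul o a b) = plus (prim o a) (prim o b)).

Definition is_qRA : Prop := is_qRA_on (fun _ => True).

Definition cyclic_on (P : A -> Prop) : Prop := forall a, P a -> tneg a = mneg a.

Definition subuniverse (P : A -> Prop) : Prop :=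
  (forall a b, P a -> P b -> P (meet o a b)) /\
  (forall a b, P a -> P b -> P (join o a b)) /\
  (forall a b, P a -> P b -> P (mul o a b)) /\
  P (one o) /\ P (zero o) /\
  (forall a, P a -> P (tneg a)) /\
  (forall a, P a -> P (mneg a)) /\
  (forall a, P a -> P (prim o a)).

(* the residuals \ and / (term-definable in an InFL-algebra) also restrict *)
Definition closed_residuals (P : A -> Prop) : Prop :=
  (forall a b, P a -> P b -> P (ldiv o a b)) /\
  (forall a b, P a -> P b -> P (rdiv o a b)).

End Q.

(* Main.v *)
Require Import Defs.
From Stdlib Require Import Setoid.

Section S.
Context {A : Type} (o : qra_ops A) (H : is_qRA o).

Let T := fun _ : A => True.

Lemma mA a b c : mul o a (mul o b c) = mul o (mul o a b) c.
Proof. destruct H as (_&_&_&_&_&_&h&_). apply h; exact I. Qed.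

Lemma resl a b c : le o (mul o a b) c <-> le o a (rdiv o c b).
Proof. destruct H as (_&_&_&_&_&_&_&_&_&h&_). apply h; exact I. Qed.
Lemma resr a b c : le o (mul o a b) c <-> le o b (ldiv o a c).
Proof. destruct H as (_&_&_&_&_&_&_&_&_&h&_). apply h; exact I. Qed.

Lemma tm a : tneg o (mneg o a) = a.
Proof. destruct H as (_&_&_&_&_&_&_&_&_&_&h&_). apply h; exact I. Qed.
Lemma mt a : mneg o (tneg o a) = a.
Proof. destruct H as (_&_&_&_&_&_&_&_&_&_&h&_). apply h; exact I. Qed.

Lemma m1 a : mul o (one o) a = a.
Proof. destruct H as (_&_&_&_&_&_&_&h&_). apply h; exact I. Qed.
Lemma m1r a : mul o a (one o) = a.
Proof. destruct H as (_&_&_&_&_&_&_&_&h&_). apply h; exact I. Qed.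

Lemma ma a b c : meet o a (meet o b c) = meet o (meet o a b) c.
Proof. destruct H as (h&_). apply h; exact I. Qed.
Lemma ja a b c : join o a (join o b c) = join o (join o a b) c.
Proof. destruct H as (_&h&_). apply h; exact I. Qed.
Lemma mc a b : meet o a b = meet o b a.
Proof. destruct H as (_&_&h&_). apply h; exact I. Qed.
Lemma jc a b : join o a b = join o b a.
Proof. destruct H as (_&_&_&h&_). apply h; exact I. Qed.
Lemma ab1 a b : meet o a (join o a b) = a.
Proof. destruct H as (_&_&_&_&h&_). apply h; exact I. Qed.
Lemma ab2 a b : join o a (meet o a b) = a.
Proof. destruct H as (_&_&_&_&_&h&_). apply h; exact I. Qed.
Lemma mid a : meet o a a = a.
Proof. rewrite <- (ab2 a a) at 2. apply ab1. Qed.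
Lemma jid a : join o a a = a.
Proof. rewrite <- (ab1 a a) at 2. apply ab2. Qed.
Lemma le_join u v : le o u v <-> join o u v = v.
Proof.
  unfold le; split; intro h.
  - rewrite <- h, jc, mc. apply ab2.
  - rewrite <- h. apply ab1.
Qed.
Lemma le_meet x a b : le o x (meet o a b) <-> le o x a /\ le o x b.
Proof.
  unfold le; split.
  - intro h; split.
    + rewrite <- h at 1. rewrite <- ma, (mc (meet o a b) a), (ma a a b), mid. exact h.
    + rewrite <- h at 1. rewrite <- ma, <- ma, mid. exact h.
  - intros [h1 h2]. rewrite ma, h1, h2. reflexivity.
Qed.
Lemma le_joinl a b y : le o (join o a b) y <-> le o a y /\ le o b y.
Proof.
  rewrite !le_join; split.
  - intro h; split.
    + rewrite <- h at 1. rewrite (ja a (join o a b) y), (ja a a b), jid. exact h.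
    + rewrite <- h at 1. rewrite (ja b (join o a b) y), (jc b (join o a b)), <- (ja a b b), jid. exact h.
  - intros [h1 h2]. rewrite <- ja, h2, h1. reflexivity.
Qed.

Lemma le_refl a : le o a a.
Proof.
  destruct H as (_&_&_&_&ab1&ab2&_).
  unfold le. rewrite <- (ab2 a a I I) at 2. apply ab1; exact I.
Qed.

Lemma le_anti a b : le o a b -> le o b a -> a = b.
Proof.
  destruct H as (_&_&mc&_).
  unfold le. intros h1 h2. rewrite <- h1, <- h2 at 1. rewrite mc; auto.
  rewrite h2. auto.
Qed.

Lemma indirect u v : (forall x, le o x u <-> le o x v) -> u = v.
Proof.
  intro h. apply le_anti; [apply h | apply (proj2 (h v))]; apply le_refl.
Qed.

Lemma le_t x a : le o x (tneg o a) <-> le o (mul o a x) (zero o).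
Proof. unfold tneg. split; apply resr. Qed.
Lemma le_m x a : le o x (mneg o a) <-> le o (mul o x a) (zero o).
Proof. unfold mneg. split; apply resl. Qed.

Lemma ldivE a b : ldiv o a b = tneg o (mul o (mneg o b) a).
Proof.
  apply indirect; intro x. rewrite le_t, <- mA, <- le_t, tm.
  split; apply resr.
Qed.

Lemma rdivE a b : rdiv o a b = mneg o (mul o b (tneg o a)).
Proof.
  apply indirect; intro x. rewrite le_m, mA, <- le_m, mt.
  split; apply resl.
Qed.

Lemma t1 : tneg o (one o) = zero o.
Proof. apply indirect; intro x. rewrite le_t, m1. split; auto. Qed.
Lemma mn1 : mneg o (one o) = zero o.
Proof. apply indirect; intro x. rewrite le_m, m1r. split; auto. Qed.

End S.

Theorem proposition2p4 (A : Type) (o : qra_ops A) :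
  is_qRA o ->
  let C := fun a : A => tneg o a = mneg o a in
  subuniverse o C /\ closed_residuals o C /\ is_qRA_on o C /\ cyclic_on o C.
Proof.
  intros H C.
  pose proof H as H'.
  destruct H' as (l1&l2&l3&l4&l5&l6&n1&n2&n3&rs&inv&p1&p2&p3&p4).
  assert (Ct : forall a, C a -> C (tneg o a)).
  { unfold C; intros a h. rewrite (mt o H). rewrite h at 1. apply (tm o H). }
  assert (Cm : forall a, C a -> C (mneg o a)).
  { intros a h. rewrite <- h. apply Ct; auto. }
  assert (Cmul : forall a b, C a -> C b -> C (mul o a b)).
  { unfold C; intros a b ha hb. apply (indirect o H); intro x.
    transitivity (le o (mul o (mul o b x) a) (zero o)).
    - rewrite (le_t o H), <- (mA o H), <- (le_t o H (mul o b x) a), ha, (le_m o H). reflexivity.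
    - rewrite (le_m o H), (mA o H), <- (le_m o H (mul o x a) b), <- hb, (le_t o H), (mA o H). reflexivity. }
  assert (tj : forall a b, tneg o (join o a b) = meet o (tneg o a) (tneg o b)).
  { intros a b. apply (indirect o H); intro x.
    rewrite (le_meet o H), !(le_t o H), !(resl o H), (le_joinl o H). reflexivity. }
  assert (mj : forall a b, mneg o (join o a b) = meet o (mneg o a) (mneg o b)).
  { intros a b. apply (indirect o H); intro x.
    rewrite (le_meet o H), !(le_m o H), !(resr o H), (le_joinl o H). reflexivity. }
  assert (Cjoin : forall a b, C a -> C b -> C (join o a b)).
  { unfold C; intros a b ha hb. rewrite tj, mj, ha, hb. reflexivity. }
  assert (Cmeet : forall a b, C a -> C b -> C (meet o a b)).
  { unfold C; intros a b ha hb.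
    assert (e1 : meet o a b = mneg o (join o (tneg o a) (tneg o b))).
    { rewrite mj, !(mt o H). reflexivity. }
    assert (e2 : meet o a b = tneg o (join o (mneg o a) (mneg o b))).
    { rewrite tj, !(tm o H). reflexivity. }
    rewrite e1 at 1. rewrite e2. rewrite (tm o H), (mt o H), ha, hb. reflexivity. }
  assert (C1 : C (one o)).
  { unfold C. rewrite (t1 o H), (mn1 o H). reflexivity. }
  assert (C0 : C (zero o)).
  { unfold C. transitivity (one o).
    - rewrite <- (mn1 o H). apply (tm o H).
    - rewrite <- (t1 o H). symmetry. apply (mt o H). }
  assert (Cp : forall a, C a -> C (prim o a)).
  { unfold C; intros a h. rewrite <- (p3 a I).
    assert (e : prim o a = mneg o (prim o (mneg o a))).
    { rewrite <- (p3 _ I), (tm o H). reflexivity. }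
    rewrite e at 1. rewrite (tm o H), h. reflexivity. }
  split; [|split; [|split]].
  - repeat split; auto.
  - split; intros a b ha hb.
    + rewrite (ldivE o H). auto.
    + rewrite (rdivE o H). auto.
  - repeat split; intros;
      first [ apply l1; exact I | apply l2; exact I | apply l3; exact I | apply l4; exact I
            | apply l5; exact I | apply l6; exact I | apply n1; exact I | apply n2; exact I
            | apply n3; exact I | apply (inv _ I) | apply p1; exact I | apply p2; exact I
            | apply p3; exact I | apply p4; exact I
            | apply (rs _ _ _ I I I); assumption | apply (proj1 (rs _ _ _ I I I)); assumption | apply (proj2 (rs _ _ _ I I I)); assumption ].
  - intros a h; exact h.
Qed.
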